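(* Let $\lambda>0$. For $\gamma>1$ let $B=B(\gamma)=\frac{\gamma-1}{2\gamma(\gamma+1)}$ and let $A=A(\gamma)>0$ be determined by \[2A^{\frac{\gamma+1}{2(\gamma-1)}}B^{-\frac12}\int_0^{\pi/2}(\cos\theta)^{\frac{\gamma+1}{\gamma-1}}d\theta=\lambda,\] and define $\mathcal{B}_\gamma(\xi)=\big[A-B\xi^2\big]_+^{\frac{1}{\gamma-1}}$ for $\xi\in\mathbb{R}$, where $[f]_+=\max\{f,0\}$ (so that the Barenblatt solution of $\partial_t\overline\rho_\gamma=\partial_x^2(\overline\rho_\gamma^{\,\gamma})$, $\overline\rho_\gamma(-1,\cdot)=\lambda\delta$, is $\overline\rho_\gamma(t,x)=(1+t)^{-\frac{1}{\gamma+1}}\mathcal{B}_\gamma\big(x(1+t)^{-\frac{1}{\gamma+1}}\big)$). Then \[\mathcal{B}_\gamma\longrightarrow\frac{\lambda}{2\sqrt{\pi}}e^{-\frac{\xi^2}{4}}\quad\text{in } L^\infty(\mathbb{R})\ \text{as }\gamma\to1.\] *)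

(* Defs.v *)
From Stdlib Require Import Reals.
From Coquelicot Require Import Coquelicot.
Open Scope R_scope.

(* Real power x^p for x >= 0 and p > 0, with the convention 0^p = 0
   (Stdlib's Rpower 0 p would be 1). *)
Definition ppow (x p : R) : R :=
  if Rlt_dec 0 x then Rpower x p else 0.

Definition pos_part (f : R) : R := Rmax f 0.

Definition Bg (g : R) : R := (g - 1) / (2 * g * (g + 1)).

Definition A_condition (lam g A : R) : Prop :=
  2 * ppow A ((g + 1) / (2 * (g - 1))) * / sqrt (Bg g)
    * RInt (fun th => ppow (cos th) ((g + 1) / (g - 1))) 0 (PI / 2) = lam.

Definition Barenblatt (A g xi : R) : R :=
  ppow (pos_part (A - Bg g * xi ^ 2)) (1 / (g - 1)).

Definition heat_profile (lam xi : R) : R :=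
  lam / (2 * sqrt PI) * exp (- xi ^ 2 / 4).

(* Main.v *)
Require Import Defs.
From Stdlib Require Import Reals Lra Lia.
From Coquelicot Require Import Coquelicot.
Open Scope R_scope.

Definition lim1 (f : R -> R) (l : R) := filterlim f (at_right 1) (locally l).

Lemma lim1_plus f g a b : lim1 f a -> lim1 g b -> lim1 (fun x => f x + g x) (a + b).
Proof.
  intros Hf Hg. unfold lim1.
  apply (filterlim_comp_2 f g Rplus Hf Hg (filterlim_plus a b)).
Qed.

Lemma lim1_mult f g a b : lim1 f a -> lim1 g b -> lim1 (fun x => f x * g x) (a * b).
Proof.
  intros Hf Hg. unfold lim1.
  apply (filterlim_comp_2 f g Rmult Hf Hg (filterlim_mult a b)).
Qed.

Lemma lim1_cont f h a : lim1 f a -> continuous h a -> lim1 (fun x => h (f x)) (h a).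
Proof.
  intros Hf Hh. unfold lim1. eapply filterlim_comp; eauto.
Qed.

Lemma lim1_const c : lim1 (fun _ => c) c.
Proof. apply filterlim_const. Qed.

Lemma lim1_id : lim1 (fun x => x) 1.
Proof.
  unfold lim1. intros P HP. unfold filtermap, at_right, within.
  revert HP. apply filter_imp. auto.
Qed.

Lemma lim1_ext f g l : (forall x, 1 < x -> f x = g x) -> lim1 f l -> lim1 g l.
Proof.
  intros He Hf. unfold lim1. intros P HP.
  specialize (Hf P HP). unfold filtermap in *. unfold at_right, within in *.
  revert Hf. apply filter_imp. intros x H Hx. rewrite <- He; auto.
Qed.

Lemma lim1_eps f l : lim1 f l -> forall eps, 0 < eps ->
  at_right 1 (fun x => Rabs (f x - l) < eps).
Proof.
  intros Hf eps he. apply (Hf (fun y => Rabs (y - l) < eps)).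
  exists (mkposreal eps he). intros y Hy. apply Hy.
Qed.

Lemma lim1_explicit f l : (forall eps, 0 < eps -> exists d, 0 < d /\
   forall x, 1 < x < 1 + d -> Rabs (f x - l) < eps) -> lim1 f l.
Proof.
  intros H P [e He]. destruct (H e (cond_pos e)) as [d [hd Hd]].
  exists (mkposreal d hd). intros y Hy Hy1. apply He.
  unfold ball in *; simpl in *. unfold AbsRing_ball, abs, minus, plus, opp in *; simpl in *.
  apply Hd. split; auto. apply Rabs_lt_between in Hy. lra.
Qed.

Lemma at_right_ex (P : R -> Prop) : at_right 1 P -> exists d, 0 < d /\ forall x, 1 < x < 1 + d -> P x.
Proof.
  intros [e He]. exists e. split. apply cond_pos. intros x Hx. apply He; [|lra].
  unfold ball; simpl. unfold AbsRing_ball, abs, minus, plus, opp; simpl.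
  apply Rabs_lt_between. lra.
Qed.

Lemma cont_der (f : R -> R) x : ex_derive f x -> continuous f x.
Proof. apply (@ex_derive_continuous R_AbsRing R_NormedModule). Qed.

Lemma ex_RInt_cont (f : R -> R) a b : (forall z, Rmin a b <= z <= Rmax a b -> continuous f z) -> ex_RInt f a b.
Proof. apply (@ex_RInt_continuous R_CompleteNormedModule). Qed.

Definition In (n : nat) := RInt (fun th => cos th ^ n) 0 (PI / 2).

Lemma ex_In n : ex_RInt (fun th => cos th ^ n) 0 (PI / 2).
Proof.
  apply ex_RInt_cont. intros z _. apply cont_der. auto_derive. auto.
Qed.

Lemma In0 : In 0 = PI / 2.
Proof.
  unfold In. simpl. rewrite RInt_const. unfold scal; simpl. unfold mult; simpl. lra.
Qed.

Lemma In1 : In 1 = 1.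
Proof.
  unfold In. apply is_RInt_unique.
  replace 1 with (minus (sin (PI/2)) (sin 0)).
  2: { rewrite sin_PI2, sin_0. unfold minus, plus, opp; simpl. ring. }
  apply (is_RInt_derive sin (fun th => cos th ^ 1)).
  - intros x _. auto_derive; auto. ring.
  - intros x _. apply cont_der. auto_derive. auto.
Qed.

Lemma In_rec n : INR (S (S n)) * In (S (S n)) = INR (S n) * In n.
Proof.
  assert (H : is_RInt (fun x => INR (S (S n)) * cos x ^ (S (S n)) - INR (S n) * cos x ^ n) 0 (PI/2)
     (minus (sin (PI/2) * cos (PI/2) ^ (S n)) (sin 0 * cos 0 ^ (S n)))).
  { apply (is_RInt_derive (fun x => sin x * cos x ^ (S n))).
    - intros x _. auto_derive; auto.
      change (match n with 0%nat => 1 | S _ => INR n + 1 end) with (INR (S n)).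
      rewrite !S_INR.
      assert (Hs : sin x * sin x = 1 - cos x * cos x).
      { pose proof (sin2_cos2 x). unfold Rsqr in *. lra. }
      replace (sin x * (1 * - sin x * ((INR n + 1) * cos x ^ n))) with
        (- (sin x * sin x) * ((INR n + 1) * cos x ^ n)) by ring.
      rewrite Hs. change (cos x ^ S (S n)) with (cos x * (cos x * cos x ^ n)). ring.
    - intros x _. apply cont_der. auto_derive. auto. }
  assert (E : minus (sin (PI/2) * cos (PI/2) ^ (S n)) (sin 0 * cos 0 ^ (S n)) = 0).
  { rewrite cos_PI2, sin_0. unfold minus, plus, opp; simpl. ring. }
  rewrite E in H. clear E.
  apply (is_RInt_unique (V:=R_CompleteNormedModule)) in H.
  rewrite (RInt_minus (fun x => INR (S (S n)) * cos x ^ (S (S n))) (fun x => INR (S n) * cos x ^ n)) in H.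
  2,3: apply (ex_RInt_scal (V:=R_CompleteNormedModule)); apply ex_In.
  rewrite (RInt_scal (fun x => cos x ^ (S (S n)))) in H by apply ex_In.
  rewrite (RInt_scal (fun x => cos x ^ n)) in H by apply ex_In.
  unfold minus, plus, opp, scal in H; simpl in H. unfold mult in H; simpl in H.
  change (match n with 0%nat => 1 | S _ => INR n + 1 end) with (INR (S n)) in H.
  change (RInt (fun x : R => cos x * (cos x * cos x ^ n)) 0 (PI / 2)) with (In (S (S n))) in H.
  change (RInt (fun x : R => cos x ^ n) 0 (PI / 2)) with (In n) in H.
  rewrite (S_INR (S n)). lra.
Qed.

Lemma In_W n : INR (S n) * In (S n) * In n = PI / 2.
Proof.
  induction n as [|n IH].
  - rewrite In0, In1. simpl. lra.
  - rewrite In_rec. rewrite <- IH. ring.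
Qed.

Lemma cos_01 x : 0 < x < PI / 2 -> 0 < cos x <= 1.
Proof.
  intros H. split. apply cos_gt_0; lra. apply COS_bound.
Qed.

Lemma In_ge0 n : 0 <= In n.
Proof.
  assert (H: RInt (fun _ => 0) 0 (PI/2) <= In n).
  { apply RInt_le. pose proof PI_RGT_0; lra. apply ex_RInt_const. apply ex_In.
    intros x Hx. apply pow_le. apply Rlt_le, cos_01; auto. }
  rewrite RInt_const in H. unfold scal in H; simpl in H. unfold mult in H; simpl in H. lra.
Qed.

Lemma In_decr n : In (S n) <= In n.
Proof.
  apply RInt_le. pose proof PI_RGT_0; lra. apply ex_In. apply ex_In.
  intros x Hx. destruct (cos_01 x Hx). simpl.
  rewrite <- (Rmult_1_l (cos x ^ n)) at 2. apply Rmult_le_compat_r; auto.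
  apply pow_le; lra.
Qed.

Lemma In_pos n : 0 < In n.
Proof.
  pose proof (In_W n). pose proof (In_ge0 n). pose proof (In_ge0 (S n)).
  pose proof PI_RGT_0. pose proof (pos_INR n). rewrite S_INR in H.
  destruct H0 as [H0|H0]; auto. rewrite <- H0 in H. lra.
Qed.

Lemma In_sq_bounds n : (1 <= n)%nat ->
  PI / (2 * (INR n + 1)) <= In n ^ 2 <= PI / (2 * INR n).
Proof.
  intros Hn. pose proof PI_RGT_0. split.
  - pose proof (In_W n). rewrite S_INR in H0.
    assert (In n * In (S n) = PI / (2 * (INR n + 1))).
    { pose proof (pos_INR n). field_simplify_eq; [|lra]. lra. }
    rewrite <- H1. simpl. rewrite Rmult_1_r. apply Rmult_le_compat_l.
    apply In_ge0. apply In_decr.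
  - destruct n as [|k]. lia.
    pose proof (In_W k).
    assert (In (S k) * In k = PI / (2 * INR (S k))).
    { pose proof (pos_INR k). rewrite S_INR in *. field_simplify_eq; [|lra]. lra. }
    rewrite <- H1. simpl. rewrite Rmult_1_r. apply Rmult_le_compat_l.
    apply In_ge0. apply In_decr.
Qed.
Lemma ppow_pos x p : 0 < x -> ppow x p = Rpower x p.
Proof. intros H. unfold ppow. destruct (Rlt_dec 0 x); [auto|lra]. Qed.

Lemma ppow_npos x p : x <= 0 -> ppow x p = 0.
Proof. intros H. unfold ppow. destruct (Rlt_dec 0 x); [lra|auto]. Qed.

Lemma ppow_cont p x : 0 < p -> continuous (fun y => ppow y p) x.
Proof.
  intros Hp. destruct (Rlt_le_dec 0 x) as [Hx|Hx].
  - apply (continuous_ext_loc _ (fun y => exp (p * ln y))).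
    + exists (mkposreal x Hx). intros y Hy.
      unfold ball in Hy; simpl in Hy. unfold AbsRing_ball, abs, minus, plus, opp in Hy; simpl in Hy.
      apply Rabs_lt_between in Hy. rewrite ppow_pos by lra. reflexivity.
    + apply cont_der. auto_derive. auto.
  - destruct Hx as [Hx|Hx].
    + apply (continuous_ext_loc _ (fun _ => 0)).
      * exists (mkposreal (-x) ltac:(lra)). intros y Hy.
        unfold ball in Hy; simpl in Hy. unfold AbsRing_ball, abs, minus, plus, opp in Hy; simpl in Hy.
        apply Rabs_lt_between in Hy. rewrite ppow_npos by lra. reflexivity.
      * apply continuous_const.
    + subst x. unfold continuous. rewrite ppow_npos by lra.
      apply filterlim_locally. intros eps.
      assert (Hd : 0 < Rpower eps (/ p)) by (unfold Rpower; apply exp_pos).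
      exists (mkposreal _ Hd). intros y Hy.
      unfold ball in Hy |- *; simpl in Hy |- *. unfold AbsRing_ball, abs, minus, plus, opp in Hy |- *; simpl in Hy |- *.
      rewrite Ropp_0, Rplus_0_r in *.
      destruct (Rlt_le_dec 0 y) as [Hy0|Hy0].
      * rewrite ppow_pos by auto. rewrite Rabs_pos_eq by (unfold Rpower; apply Rlt_le, exp_pos).
        rewrite Rabs_pos_eq in Hy by lra.
        replace (pos eps) with (Rpower (Rpower eps (/ p)) p).
        2:{ rewrite Rpower_mult. rewrite Rinv_l by lra. apply Rpower_1, cond_pos. }
        apply Rlt_Rpower_l; lra.
      * rewrite ppow_npos by auto. rewrite Rabs_R0. apply cond_pos.
Qed.

Definition Ip p := RInt (fun th => ppow (cos th) p) 0 (PI / 2).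

Lemma ex_Ip p : 0 < p -> ex_RInt (fun th => ppow (cos th) p) 0 (PI / 2).
Proof.
  intros Hp. apply (@ex_RInt_continuous R_CompleteNormedModule). intros z _.
  apply (continuous_comp cos (fun y => ppow y p)).
  apply cont_der. auto_derive. auto. apply ppow_cont; auto.
Qed.

Lemma exp_le x y : x <= y -> exp x <= exp y.
Proof. intros [H|H]. apply Rlt_le, exp_increasing; auto. subst; lra. Qed.

Lemma ln_nonpos c : 0 < c <= 1 -> ln c <= 0.
Proof.
  intros [H1 [H2|H2]]. rewrite <- ln_1. apply Rlt_le, ln_increasing; auto.
  subst. rewrite ln_1. lra.
Qed.

Lemma mul_nn_np a b : 0 <= a -> b <= 0 -> a * b <= 0.
Proof.
  intros H1 H2. pose proof (Rmult_le_pos a (-b) H1 ltac:(lra)).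
  replace (a * - b) with (-(a*b)) in H by ring. lra.
Qed.

Lemma rpow_between c p n : 0 < c <= 1 -> INR n <= p <= INR n + 1 ->
  c ^ (S n) <= Rpower c p <= c ^ n.
Proof.
  intros Hc Hp. rewrite <- !Rpower_pow by lra. rewrite S_INR.
  pose proof (ln_nonpos c Hc). unfold Rpower. split; apply exp_le.
  - replace ((INR n + 1) * ln c) with (p * ln c + (INR n + 1 - p) * ln c) by ring.
    assert ((INR n + 1 - p) * ln c <= 0). { apply mul_nn_np; lra. } lra.
  - replace (p * ln c) with (INR n * ln c + (p - INR n) * ln c) by ring.
    assert ((p - INR n) * ln c <= 0). { apply mul_nn_np; lra. } lra.
Qed.


Lemma Ip_between p n : 0 < p -> INR n <= p <= INR n + 1 -> In (S n) <= Ip p <= In n.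
Proof.
  intros Hp Hn. pose proof PI_RGT_0 as HPI. assert (H0 : 0 <= PI/2) by lra. split.
  - apply RInt_le. exact H0. apply ex_In. apply ex_Ip; auto.
    intros x Hx. destruct (cos_01 x Hx). rewrite ppow_pos by lra.
    apply (rpow_between (cos x) p n); auto.
  - apply RInt_le. exact H0. apply ex_Ip; auto. apply ex_In.
    intros x Hx. destruct (cos_01 x Hx). rewrite ppow_pos by lra.
    apply (rpow_between (cos x) p n); auto.
Qed.

Lemma Ip_pos p : 0 < p -> 0 < Ip p.
Proof.
  intros Hp. destruct (nfloor_ex p) as [n Hn]. lra.
  pose proof (Ip_between p n Hp ltac:(lra)). pose proof (In_pos (S n)). lra.
Qed.

Lemma Q_bound p : 2 <= p -> Rabs (p * Ip p ^ 2 - PI / 2) <= PI / (p - 1).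
Proof.
  intros Hp. destruct (nfloor_ex p) as [n Hn]. lra.
  assert (Hn1 : (1 <= n)%nat).
  { destruct n. simpl in Hn. lra. lia. }
  pose proof (Ip_between p n ltac:(lra) ltac:(lra)) as [Hc Hb].
  pose proof (In_sq_bounds n Hn1) as [_ Hb2].
  pose proof (In_sq_bounds (S n) ltac:(lia)) as [Hc2 _].
  rewrite S_INR in Hc2.
  pose proof (In_pos (S n)). pose proof PI_RGT_0.
  set (a := Ip p) in *. set (b := In n) in *. set (c := In (S n)) in *.
  set (N := INR n) in *.
  assert (HN : 1 <= N). { unfold N. replace 1 with (INR 1) by reflexivity. apply le_INR; auto. }
  assert (Ha2 : c ^ 2 <= a ^ 2 <= b ^ 2) by (split; apply pow_incr; lra).
  assert (U : p * a ^ 2 <= p * (PI / (2 * N))) by (apply Rmult_le_compat_l; lra).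
  assert (L : N * (PI / (2 * (N + 1 + 1))) <= p * a ^ 2).
  { apply Rmult_le_compat; try lra. apply Rlt_le, Rdiv_lt_0_compat; lra. }
  assert (U2 : p * (PI / (2 * N)) - PI / 2 <= PI / (p - 1)).
  { unfold Rdiv. apply Rle_trans with (PI * / (2 * N)).
    - assert (p * (PI * / (2 * N)) - PI * / 2 = (p - N) * (PI * / (2*N))) by (field; lra).
      rewrite H1. rewrite <- (Rmult_1_l (PI * / (2 * N))) at 2.
      apply Rmult_le_compat_r. apply Rlt_le, Rdiv_lt_0_compat; lra. lra.
    - apply Rmult_le_compat_l. lra. apply Rinv_le_contravar; lra. }
  assert (L2 : PI / 2 - N * (PI / (2 * (N + 1 + 1))) <= PI / (p - 1)).
  { replace (PI / 2 - N * (PI / (2 * (N + 1 + 1)))) with (PI / (N + 2)) by (field; lra).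
    unfold Rdiv. apply Rmult_le_compat_l. lra. apply Rinv_le_contravar; lra. }
  apply Rabs_le. lra.
Qed.

Lemma exp_ge1 x : 1 + x <= exp x.
Proof. apply exp_ineq1_le. Qed.

Lemma y_exp_bound y : 0 <= y -> y * exp (- (y / 2)) <= 2.
Proof.
  intros Hy. pose proof (exp_ge1 (y/2)). pose proof (exp_pos (y/2)).
  rewrite exp_Ropp. apply (Rmult_le_reg_r (exp (y/2))); auto.
  rewrite Rmult_assoc, Rinv_l by lra. lra.
Qed.

Lemma y2_exp_bound y : 0 <= y -> y ^ 2 * exp (- y) <= 4.
Proof.
  intros Hy. pose proof (y_exp_bound y Hy).
  replace (y ^ 2 * exp (- y)) with ((y * exp (- (y/2))) * (y * exp (- (y/2)))).
  2:{ replace (- y) with (- (y/2) + - (y/2)) by field. rewrite exp_plus. ring. }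
  assert (0 <= y * exp (- (y/2))) by (apply Rmult_le_pos; [lra| apply Rlt_le, exp_pos]).
  nra.
Qed.

Lemma exp_neg_le_inv m : 0 < m -> exp (- m) <= / m.
Proof.
  intros Hm. pose proof (exp_ge1 m). pose proof (exp_pos m). rewrite exp_Ropp.
  apply Rinv_le_contravar; lra.
Qed.

Lemma ln_upper x : x < 1 -> ln (1 - x) <= - x.
Proof.
  intros Hx. rewrite <- (ln_exp (- x)). destruct (Req_dec (1 - x) (exp (-x))) as [E|E].
  rewrite E; lra. apply Rlt_le, ln_increasing. lra.
  pose proof (exp_ge1 (- x)). lra.
Qed.

Lemma ln_lower x : 0 <= x <= 1/2 -> - x - 2 * x ^ 2 <= ln (1 - x).
Proof.
  intros Hx. assert (H1 : ln (/ (1 - x)) <= x / (1 - x)).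
  { replace (/ (1 - x)) with (1 - (- (x / (1 - x)))) by (field; lra).
    pose proof (ln_upper (- (x / (1 - x)))). apply Rle_trans with (- - (x / (1 - x))); [|lra].
    apply H. assert (0 <= x / (1 - x)).
    { unfold Rdiv; apply Rmult_le_pos; [lra| apply Rlt_le, Rinv_0_lt_compat; lra]. }
    lra. }
  rewrite ln_Rinv in H1 by lra.
  assert (x / (1 - x) <= x + 2 * x ^ 2).
  { apply (Rmult_le_reg_r (1 - x)). lra. unfold Rdiv. rewrite Rmult_assoc, Rinv_l by lra. nra. }
  lra.
Qed.

Lemma term1 m y : 0 < m -> 0 <= y ->
  0 <= ppow (Rmax (1 - y / m) 0) m <= exp (- y) /\
  Rabs (ppow (Rmax (1 - y / m) 0) m - exp (- y)) <= 8 / m.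
Proof.
  intros Hm Hy. pose proof (exp_pos (- y)) as Hey.
  destruct (Rle_lt_dec m y) as [Hmy|Hmy].
  - rewrite Rmax_right.
    2:{ assert (y / m >= 1). { apply Rle_ge. apply (Rmult_le_reg_r m); auto. unfold Rdiv. rewrite Rmult_assoc, Rinv_l by lra. lra. } lra. }
    rewrite ppow_npos by lra. split; [lra|].
    rewrite Rminus_0_l, Rabs_Ropp, Rabs_pos_eq by lra.
    apply Rle_trans with (exp (- m)). apply exp_le; lra.
    apply Rle_trans with (/ m). apply exp_neg_le_inv; auto.
    unfold Rdiv. pose proof (Rinv_0_lt_compat m Hm). lra.
  - set (x := y / m).
    assert (Hx : 0 <= x < 1).
    { unfold x. split. unfold Rdiv; apply Rmult_le_pos; [lra| apply Rlt_le, Rinv_0_lt_compat; lra].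
      apply (Rmult_lt_reg_r m); auto. unfold Rdiv. rewrite Rmult_assoc, Rinv_l by lra. lra. }
    assert (Hyx : y = m * x) by (unfold x; field; lra).
    rewrite Rmax_left by lra. rewrite ppow_pos by lra. unfold Rpower.
    assert (Hup : m * ln (1 - x) <= - y).
    { rewrite Hyx. pose proof (ln_upper x ltac:(lra)). nra. }
    assert (Hf0 : 0 < exp (m * ln (1 - x))) by apply exp_pos.
    assert (Hfu : exp (m * ln (1 - x)) <= exp (- y)) by (apply exp_le; auto).
    split; [lra|].
    rewrite Rabs_left1 by lra.
    destruct (Rle_lt_dec x (1/2)) as [Hx2|Hx2].
    + pose proof (ln_lower x ltac:(lra)) as Hl.
      assert (Hlo : - y - 2 * y ^ 2 / m <= m * ln (1 - x)).
      { replace (- y - 2 * y ^ 2 / m) with (m * (- x - 2 * x ^ 2)) by (rewrite Hyx; field; lra).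
        apply Rmult_le_compat_l; lra. }
      apply exp_le in Hlo.
      replace (- y - 2 * y ^ 2 / m) with (- y + - (2 * y ^ 2 / m)) in Hlo by ring.
      rewrite exp_plus in Hlo.
      pose proof (exp_ge1 (- (2 * y ^ 2 / m))).
      pose proof (y2_exp_bound y Hy).
      assert (exp (- y) * (1 + - (2 * y ^ 2 / m)) <= exp (- y) * exp (- (2 * y ^ 2 / m))).
      { apply Rmult_le_compat_l; lra. }
      assert (exp (- y) * (2 * y ^ 2 / m) <= 8 / m).
      { replace (exp (- y) * (2 * y ^ 2 / m)) with (2 * (y ^ 2 * exp (- y)) / m) by (field; lra).
        unfold Rdiv. apply Rmult_le_compat_r. apply Rlt_le, Rinv_0_lt_compat; lra. lra. }
      lra.
    + assert (exp (- y) <= 2 / m).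
      { apply Rle_trans with (exp (- (m / 2))).
        apply exp_le. assert (m / 2 < y) by (rewrite Hyx; nra). lra.
        replace (2 / m) with (/ (m / 2)) by (field; lra). apply exp_neg_le_inv. lra. }
      assert (2 / m <= 8 / m).
      { unfold Rdiv. apply Rmult_le_compat_r. apply Rlt_le, Rinv_0_lt_compat; lra. lra. }
      lra.
Qed.

Lemma exp_diff s t y : 1/2 <= s <= t -> 0 <= y ->
  0 <= exp (- (s * y)) - exp (- (t * y)) <= 2 * (t - s).
Proof.
  intros Hst Hy.
  assert (E : exp (- (t * y)) = exp (- (s * y)) * exp (- ((t - s) * y))).
  { rewrite <- exp_plus. f_equal. ring. }
  pose proof (exp_pos (- (s * y))). pose proof (exp_pos (- ((t - s) * y))).
  assert (exp (- ((t - s) * y)) <= 1).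
  { rewrite <- exp_0. apply exp_le. nra. }
  pose proof (exp_ge1 (- ((t - s) * y))).
  rewrite E. split. nra.
  assert (H3 : exp (- (s * y)) * y <= 2).
  { apply Rle_trans with (y * exp (- (y / 2))).
    rewrite Rmult_comm. apply Rmult_le_compat_l; auto. apply exp_le. nra.
    apply y_exp_bound; auto. }
  assert (exp (- (s * y)) - exp (- (s * y)) * exp (- ((t - s) * y)) <= exp (- (s * y)) * ((t - s) * y)).
  { nra. }
  nra.
Qed.

Lemma term2 b y : 1/2 <= b -> 0 <= y -> Rabs (exp (- y) - exp (- (b * y))) <= 2 * Rabs (1 - b).
Proof.
  intros Hb Hy. destruct (Rle_lt_dec b 1) as [H|H].
  - pose proof (exp_diff b 1 y ltac:(lra) Hy). rewrite Rmult_1_l in H0.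
    rewrite Rabs_left1 by lra. rewrite Rabs_pos_eq by lra. lra.
  - pose proof (exp_diff 1 b y ltac:(lra) Hy). rewrite Rmult_1_l in H0.
    rewrite Rabs_pos_eq by lra. rewrite Rabs_left1 by lra. lra.
Qed.

Lemma baren_bound lam A g xi : 0 < lam -> 0 < A -> 1 < g ->
  1/2 <= A * g * (g + 1) / 2 ->
  Rabs (Barenblatt A g xi - heat_profile lam xi) <=
  Rabs (Rpower A (1 / (g - 1)) - lam / (2 * sqrt PI)) + lam / (2 * sqrt PI) * (8 * (g - 1))
  + lam / (2 * sqrt PI) * (2 * Rabs (1 - A * g * (g + 1) / 2)).
Proof.
  intros Hl HA Hg Hb.
  set (K := lam / (2 * sqrt PI)). set (m := 1 / (g - 1)). set (b := A * g * (g + 1) / 2).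
  assert (HK : 0 < K).
  { unfold K. pose proof PI_RGT_0. pose proof (sqrt_lt_R0 PI H). unfold Rdiv.
    apply Rmult_lt_0_compat; auto. apply Rinv_0_lt_compat; lra. }
  assert (Hm : 0 < m) by (unfold m; unfold Rdiv; rewrite Rmult_1_l; apply Rinv_0_lt_compat; lra).
  assert (HB : 0 < Bg g).
  { unfold Bg. unfold Rdiv. apply Rmult_lt_0_compat. lra. apply Rinv_0_lt_compat. nra. }
  set (y := m * (Bg g / A) * xi ^ 2).
  assert (Hy : 0 <= y).
  { unfold y. apply Rmult_le_pos. apply Rmult_le_pos. lra.
    unfold Rdiv; apply Rmult_le_pos; [lra| apply Rlt_le, Rinv_0_lt_compat; lra].
    apply pow2_ge_0. }
  assert (E1 : A - Bg g * xi ^ 2 = A * (1 - y / m)) by (unfold y; field; lra).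
  assert (E2 : pos_part (A * (1 - y / m)) = A * Rmax (1 - y / m) 0).
  { unfold pos_part. destruct (Rle_lt_dec (1 - y/m) 0).
    rewrite !Rmax_right; [ring|lra|nra]. rewrite !Rmax_left; [ring|lra|nra]. }
  set (f := ppow (Rmax (1 - y / m) 0) m).
  assert (E3 : Barenblatt A g xi = Rpower A m * f).
  { unfold Barenblatt. rewrite E1, E2. fold m. unfold f.
    destruct (Rle_lt_dec (Rmax (1 - y / m) 0) 0) as [Hz|Hz].
    - rewrite !ppow_npos; [ring|auto|]. nra.
    - rewrite !ppow_pos; auto. rewrite Rpower_mult_distr; auto. apply Rmult_lt_0_compat; auto. }
  assert (E4 : heat_profile lam xi = K * exp (- (b * y))).
  { unfold heat_profile. fold K. f_equal. f_equal. unfold b, y, m, Bg. field. split; lra. }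
  rewrite E3, E4.
  destruct (term1 m y Hm Hy) as [Hf Hf2]. fold f in Hf, Hf2.
  pose proof (term2 b y Hb Hy) as Ht2.
  assert (8 / m = 8 * (g - 1)) by (unfold m; field; lra).
  replace (Rpower A m * f - K * exp (- (b * y))) with
    ((Rpower A m - K) * f + (K * (f - exp (- y)) + K * (exp (- y) - exp (- (b * y))))) by ring.
  eapply Rle_trans. apply Rabs_triang. rewrite Rplus_assoc. apply Rplus_le_compat.
  { rewrite Rabs_mult. rewrite (Rabs_pos_eq f) by lra.
    pose proof (Rabs_pos (Rpower A m - K)). assert (f <= 1). { pose proof (exp_le (-y) 0). rewrite exp_0 in H1. lra. }
    nra. }
  eapply Rle_trans. apply Rabs_triang. apply Rplus_le_compat.
  - rewrite Rabs_mult, Rabs_pos_eq by lra. rewrite <- H. apply Rmult_le_compat_l; lra.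
  - rewrite Rabs_mult, Rabs_pos_eq by lra. apply Rmult_le_compat_l; lra.
Qed.

Lemma lim1_eq f a b : lim1 f a -> a = b -> lim1 f b.
Proof. intros H E; subst; auto. Qed.

Lemma lim1_abs0 f a : lim1 f a -> lim1 (fun g => Rabs (f g - a)) 0.
Proof.
  intros H. apply lim1_explicit. intros eps he.
  destruct (at_right_ex _ (lim1_eps f a H eps he)) as [d [hd Hd]].
  exists d. split; auto. intros x Hx. rewrite Rminus_0_r, Rabs_Rabsolu. auto.
Qed.

Definition pg g := (g + 1) / (g - 1).
Definition Qg g := pg g * Ip (pg g) ^ 2.

Lemma lim_Q : lim1 Qg (PI / 2).
Proof.
  apply lim1_explicit. intros eps he. pose proof PI_RGT_0.
  exists (Rmin 2 (eps / PI)). split.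
  { apply Rmin_pos. lra. apply Rdiv_lt_0_compat; lra. }
  intros g [H1 H2].
  assert (Hd1 : g - 1 < 2) by (pose proof (Rmin_l 2 (eps/PI)); lra).
  assert (Hd2 : g - 1 < eps / PI) by (pose proof (Rmin_r 2 (eps/PI)); lra).
  assert (Hp : 2 <= pg g).
  { unfold pg. apply (Rmult_le_reg_r (g - 1)). lra. unfold Rdiv. rewrite Rmult_assoc, Rinv_l by lra. lra. }
  pose proof (Q_bound (pg g) Hp). unfold Qg.
  eapply Rle_lt_trans. apply H0.
  replace (PI / (pg g - 1)) with (PI * (g - 1) / 2) by (unfold pg; field; lra).
  apply (Rmult_lt_compat_l PI) in Hd2; auto.
  replace (PI * (eps / PI)) with eps in Hd2 by (field; lra). lra.
Qed.

Definition Xg lam g := lam / 2 * sqrt (/ (2 * g * Qg g)).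

Lemma lim_X lam : lim1 (Xg lam) (lam / (2 * sqrt PI)).
Proof.
  pose proof PI_RGT_0.
  assert (H1 : lim1 (fun g => 2 * g * Qg g) PI).
  { apply lim1_eq with (2 * 1 * (PI / 2)); [|field].
    apply lim1_mult. apply lim1_mult. apply lim1_const. apply lim1_id. apply lim_Q. }
  assert (H2 : lim1 (fun g => / (2 * g * Qg g)) (/ PI)).
  { apply (lim1_cont _ Rinv). auto. apply cont_der. auto_derive. lra. }
  assert (H3 : lim1 (fun g => sqrt (/ (2 * g * Qg g))) (sqrt (/ PI))).
  { apply (lim1_cont _ sqrt). auto. apply continuous_sqrt. }
  unfold Xg. apply lim1_eq with (lam / 2 * sqrt (/ PI)).
  apply lim1_mult. apply lim1_const. auto.
  rewrite sqrt_inv. field. pose proof (sqrt_lt_R0 PI H). lra.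
Qed.

Lemma key lam A g : 1 < g -> 0 < A -> A_condition lam g A ->
  Rpower A ((g + 1) / (2 * (g - 1))) = Xg lam g.
Proof.
  intros Hg HA HC. unfold A_condition in HC.
  change (RInt (fun th => ppow (cos th) ((g + 1) / (g - 1))) 0 (PI / 2)) with (Ip (pg g)) in HC.
  rewrite ppow_pos in HC by auto.
  assert (Hp : 0 < pg g) by (unfold pg; apply Rdiv_lt_0_compat; lra).
  pose proof (Ip_pos _ Hp) as HI.
  assert (HB : 0 < Bg g) by (unfold Bg; apply Rdiv_lt_0_compat; nra).
  pose proof (sqrt_lt_R0 _ HB) as HsB.
  set (I := Ip (pg g)) in *. set (R := Rpower A ((g + 1) / (2 * (g - 1)))) in *.
  assert (E : R = lam * sqrt (Bg g) / (2 * I)).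
  { rewrite <- HC. field. split; lra. }
  rewrite E. unfold Xg, Qg. fold I.
  assert (E2 : / (2 * g * (pg g * I ^ 2)) = Bg g * (/ I) ^ 2).
  { unfold pg, Bg. field. repeat split; lra. }
  rewrite E2. rewrite sqrt_mult_alt by lra. rewrite sqrt_pow2.
  2:{ apply Rlt_le, Rinv_0_lt_compat; auto. }
  field. lra.
Qed.

Theorem proposition3 (lam : R) (A : R -> R) :
  0 < lam ->
  (forall g, 1 < g -> 0 < A g /\ A_condition lam g (A g)) ->
  forall eps, 0 < eps ->
  exists delta, 0 < delta /\
    forall g, 1 < g < 1 + delta ->
      forall xi, Rabs (Barenblatt (A g) g xi - heat_profile lam xi) <= eps.
Proof.
  intros Hl HA eps Heps.
  set (K := lam / (2 * sqrt PI)).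
  pose proof PI_RGT_0 as HPI.
  assert (HK : 0 < K).
  { unfold K. pose proof (sqrt_lt_R0 PI HPI). apply Rdiv_lt_0_compat; lra. }
  pose proof (lim_X lam) as LX. fold K in LX.
  assert (LlnX : lim1 (fun g => ln (Xg lam g)) (ln K)).
  { apply (lim1_cont _ ln). auto. apply cont_der. auto_derive. auto. }
  assert (LAm : lim1 (fun g => Rpower (A g) (1 / (g - 1))) K).
  { apply lim1_ext with (fun g => exp (2 / (g + 1) * ln (Xg lam g))).
    { intros g Hg. destruct (HA g Hg) as [H0 H1].
      rewrite <- (key lam (A g) g Hg H0 H1).
      unfold Rpower. rewrite ln_exp. f_equal. field. lra. }
    apply lim1_eq with (exp (1 * ln K)).
    2:{ rewrite Rmult_1_l, exp_ln; auto. }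
    apply (lim1_cont _ exp). 2: apply cont_der; auto_derive; auto.
    apply lim1_mult; auto.
    apply lim1_eq with (2 / (1 + 1)); [|field].
    apply (lim1_cont _ (fun z => 2 / (z + 1))). apply lim1_id. apply cont_der. auto_derive. lra. }
  assert (LA : lim1 A 1).
  { apply lim1_ext with (fun g => exp (2 * (g - 1) / (g + 1) * ln (Xg lam g))).
    { intros g Hg. destruct (HA g Hg) as [H0 H1].
      rewrite <- (key lam (A g) g Hg H0 H1).
      unfold Rpower. rewrite ln_exp. transitivity (exp (ln (A g))). f_equal; field; lra. apply exp_ln; auto. }
    apply lim1_eq with (exp (0 * ln K)).
    2:{ rewrite Rmult_0_l, exp_0; auto. }
    apply (lim1_cont _ exp). 2: apply cont_der; auto_derive; auto.
    apply lim1_mult; auto.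
    apply lim1_eq with (2 * (1 - 1) / (1 + 1)); [|field].
    apply (lim1_cont _ (fun z => 2 * (z - 1) / (z + 1))). apply lim1_id. apply cont_der. auto_derive. lra. }
  assert (Lb : lim1 (fun g => A g * g * (g + 1) / 2) 1).
  { apply lim1_ext with (fun g => A g * (g * (g + 1) / 2)).
    { intros; field. }
    apply lim1_eq with (1 * (1 * (1 + 1) / 2)); [|field].
    apply lim1_mult; auto.
    apply (lim1_cont _ (fun z => z * (z + 1) / 2)). apply lim1_id. apply cont_der. auto_derive. auto. }
  assert (LE : lim1 (fun g => Rabs (Rpower (A g) (1 / (g - 1)) - K) + K * (8 * (g - 1))
                     + K * (2 * Rabs (1 - A g * g * (g + 1) / 2))) 0).
  { apply lim1_eq with (0 + K * (8 * (1 - 1)) + K * (2 * 0)); [|ring].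
    apply lim1_plus. apply lim1_plus. apply lim1_abs0; auto.
    apply (lim1_cont _ (fun z => K * (8 * (z - 1)))). apply lim1_id. apply cont_der. auto_derive. auto.
    apply lim1_mult. apply lim1_const. apply lim1_mult. apply lim1_const.
    apply lim1_ext with (fun g => Rabs (A g * g * (g + 1) / 2 - 1)).
    { intros; apply Rabs_minus_sym. }
    apply lim1_abs0; auto. }
  pose proof (lim1_eps _ _ LE eps Heps) as F1.
  pose proof (lim1_eps _ _ Lb (1/2) ltac:(lra)) as F2.
  destruct (at_right_ex _ (filter_and _ _ F1 F2)) as [d [hd Hd]].
  exists d. split; auto. intros g Hg xi.
  destruct (Hd g Hg) as [H1 H2]. destruct (HA g ltac:(lra)) as [H0 _].
  rewrite Rminus_0_r in H1. apply Rabs_lt_between in H2.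
  eapply Rle_trans. apply baren_bound; auto; lra.
  fold K. apply Rle_trans with (Rabs (Rabs (Rpower (A g) (1 / (g - 1)) - K) + K * (8 * (g - 1))
                     + K * (2 * Rabs (1 - A g * g * (g + 1) / 2)))).
  apply RRle_abs. lra.
Qed.
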